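(* Let $m\ge1$, let ${\bf d}^m=(d_1,\dots,d_m)$ be positive integers, and let $j\ge2$ be an integer, with the $d_i$ ordered so that $d_1,\dots,d_{k_j}$ are exactly those divisible by $j$ ($0\le k_j\le m$). Put $s_m=\sum_{i=1}^m d_i$, $\pi_m=\prod_{i=1}^m d_i$ and ${\bf d}^m_j=(d_1,\dots,d_{k_j},\,jd_{k_j+1},\dots,jd_m)$. Then for every $s$, $$\frac{j^{k_j-m}}{(m-1)!\,\pi_m}\sum_{r_{k_j+1}=0}^{j-1}\cdots\sum_{r_m=0}^{j-1} B^{(m)}_{m-1}\Big(s+s_m+\sum_{i=k_j+1}^m r_id_i,\ {\bf d}^m_j\Big)=\frac{1}{(m-1)!\,\pi_m}B^{(m)}_{m-1}\big(s+s_m,{\bf d}^m\big),$$ and the right-hand side equals the polynomial part $W_1(s,{\bf d}^m)$ of the restricted partition function.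
   Context: For an integer $q\ge1$ and nonzero numbers ${\bf e}=(e_1,\dots,e_q)$, the Bernoulli polynomials of higher order $B^{(q)}_n(x,{\bf e})$ are defined by $$\frac{e^{xt}\,t^q\prod_{i=1}^q e_i}{\prod_{i=1}^q (e^{e_it}-1)}=\sum_{n=0}^\infty B^{(q)}_n(x,{\bf e})\frac{t^n}{n!}.$$ $W_1(s,{\bf d}^m)$ denotes the first Sylvester wave, i.e. the coefficient of $t^{-1}$ in the Laurent expansion in $t$ of $e^{st}/\prod_{k=1}^m(1-e^{-d_kt})$; it is known to equal $\frac{1}{(m-1)!\,\pi_m}B^{(m)}_{m-1}(s+s_m,{\bf d}^m)$. *)

(* Defs.v *)
From HB Require Import structures.
From mathcomp Require Import all_boot all_order all_algebra.
Set Implicit Arguments. Unset Strict Implicit. Unset Printing Implicit Defensive.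
Import Order.TTheory GRing.Theory Num.Theory.
Local Open Scope ring_scope.

Section PS.
Variable R : fieldType.

Definition ps := nat -> R.

Definition psmul (f g : ps) : ps :=
  fun n => \sum_(i < n.+1) f i * g (n - i)%N.

Definition ps1 : ps := fun n => (n == 0)%:R.

Definition psexp (a : R) : ps := fun n => a ^+ n / (n`!)%:R.

Fixpoint psdiv_seq (f g : ps) (n : nat) : seq R :=
  match n with
  | 0 => [:: f 0%N / g 0%N]
  | n'.+1 =>
      let s := psdiv_seq f g n' in
      rcons s ((f n - \sum_(1 <= k < n.+1) g k * nth 0 s (n - k)%N) / g 0%N)
  end.

Definition psdiv (f g : ps) : ps := fun n => nth 0 (psdiv_seq f g n) n.

(* (e^{c t} - 1)/(c t) = sum_k c^k t^k/(k+1)! *)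
Definition bern_factor (c : R) : ps := fun k => c ^+ k / (k.+1)`!%:R.

(* Bernoulli polynomials of higher order B^{(q)}_n(x, e):
   e^{xt} t^q prod e_i / prod (e^{e_i t} - 1) = e^{xt} / prod_i ((e^{e_i t}-1)/(e_i t))
   = sum_n B^{(q)}_n(x,e) t^n/n!  (as formal power series). *)
Definition bernoulliH (q : nat) (e : 'I_q -> R) : ps :=
  \big[psmul/ps1]_(i < q) bern_factor (e i).

Definition higherBernoulli (q n : nat) (x : R) (e : 'I_q -> R) : R :=
  (n`!)%:R * psdiv (psexp x) (bernoulliH e) n.

(* (1 - e^{-c t})/t = sum_k -(-c)^{k+1} t^k/(k+1)! *)
Definition sylv_factor (c : R) : ps := fun k => - (- c) ^+ k.+1 / (k.+1)`!%:R.

(* First Sylvester wave W_1(s, d^m): coefficient of t^{-1} in the Laurent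
   expansion of e^{st} / prod_k (1 - e^{-d_k t})
   = t^{-m} e^{st} / prod_k ((1 - e^{-d_k t})/t),
   i.e. the coefficient of t^{m-1} in e^{st} / prod_k ((1 - e^{-d_k t})/t). *)
Definition sylvesterW1 (m : nat) (s : R) (d : 'I_m -> nat) : R :=
  psdiv (psexp s) (\big[psmul/ps1]_(k < m) sylv_factor (d k)%:R) m.-1.

End PS.

Definition sumd (m : nat) (d : 'I_m -> nat) : nat := \sum_(i < m) d i.
Definition prodd (m : nat) (d : 'I_m -> nat) : nat := \prod_(i < m) d i.

(* d^m_j = (d_1,...,d_{k_j}, j d_{k_j+1}, ..., j d_m)  (0-based: indices < k kept) *)
Definition dscaled (m : nat) (d : 'I_m -> nat) (j k : nat) : 'I_m -> nat :=
  fun i => if (i < k)%N then d i else (j * d i)%N.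

(* Main.v *)
Require Import Defs.
From HB Require Import structures.
From mathcomp Require Import all_boot all_order all_algebra.
From Stdlib Require Import FunctionalExtensionality.
From mathcomp Require Import ring.
Set Implicit Arguments. Unset Strict Implicit. Unset Printing Implicit Defensive.
Import Order.TTheory GRing.Theory Num.Theory.
Local Open Scope ring_scope.

Section PST.
Variable R : numFieldType.
Local Notation ps := (ps R).
Implicit Types f g h : ps.

Lemma psmulC : commutative (@psmul R).
Proof.
move=> f g; apply: functional_extensionality => n; rewrite /psmul.
rewrite (reindex_inj rev_ord_inj) /=.
by apply: eq_bigr => j _; rewrite (sub_ordK j) mulrC.
Qed.

Lemma psmul_rev f g n : psmul f g n = \sum_(j < n.+1) f (n - j)%N * g j.
Proof.
rewrite /psmul (reindex_inj rev_ord_inj) /=.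
by apply: eq_bigr => j _; rewrite (sub_ordK j).
Qed.

Lemma psmulA : associative (@psmul R).
Proof.
move=> p q r; apply: functional_extensionality => i.
have -> : psmul p (psmul q r) i = \sum_(j < i.+1) p j * psmul q r (i-j)%N by [].
rewrite psmul_rev.
pose coef3 j k := p j * (q (i - j - k)%N * r k).
transitivity (\sum_(j < i.+1) \sum_(k < i.+1 | (k <= i - j)%N) coef3 j k).
  apply: eq_bigr => /= j _; rewrite psmul_rev big_distrr /=.
  by rewrite (big_ord_narrow_leq (leq_subr _ _)).
rewrite (exchange_big_dep predT) //=; apply: eq_bigr => k _.
transitivity (\sum_(j < i.+1 | (j <= i - k)%N) coef3 j k).
  apply: eq_bigl => j; rewrite -ltnS -(ltnS j) -!subSn ?leq_ord //.
  by rewrite -subn_gt0 -(subn_gt0 j) -!subnDA addnC.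
rewrite (big_ord_narrow_leq (leq_subr _ _)) big_distrl /=.
by apply: eq_bigr => j _; rewrite /coef3 -!subnDA addnC mulrA.
Qed.

Lemma psmul1l : left_id (ps1 R) (@psmul R).
Proof.
move=> p; apply: functional_extensionality => i; rewrite /psmul big_ord_recl subn0.
by rewrite big1 => [|j _]; rewrite /ps1 ?mul1r ?addr0 // mul0r.
Qed.

Lemma psmul1r : right_id (ps1 R) (@psmul R).
Proof. by move=> p; rewrite psmulC psmul1l. Qed.

HB.instance Definition _ := Monoid.isComLaw.Build ps (ps1 R) (@psmul R) psmulA psmulC psmul1l.

Definition ps0 : ps := fun _ => 0.
Definition psadd f g : ps := fun n => f n + g n.

Lemma psaddA : associative psadd.
Proof. by move=> f g h; apply: functional_extensionality => n; rewrite /psadd addrA. Qed.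
Lemma psaddC : commutative psadd.
Proof. by move=> f g; apply: functional_extensionality => n; rewrite /psadd addrC. Qed.
Lemma psadd0 : left_id ps0 psadd.
Proof. by move=> f; apply: functional_extensionality => n; rewrite /psadd add0r. Qed.
HB.instance Definition _ := Monoid.isComLaw.Build ps ps0 psadd psaddA psaddC psadd0.

Lemma psmul0l : left_zero ps0 (@psmul R).
Proof. by move=> f; apply: functional_extensionality => n; rewrite /psmul big1 // => i _; rewrite mul0r. Qed.
Lemma psmul0r : right_zero ps0 (@psmul R).
Proof. by move=> f; rewrite psmulC psmul0l. Qed.
HB.instance Definition _ := Monoid.isMulLaw.Build ps ps0 (@psmul R) psmul0l psmul0r.

Lemma psmulDl : left_distributive (@psmul R) psadd.
Proof. by move=> f g h; apply: functional_extensionality => n; rewrite /psmul /psadd -big_split; apply: eq_bigr => i _; rewrite mulrDl. Qed.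
Lemma psmulDr : right_distributive (@psmul R) psadd.
Proof. by move=> f g h; rewrite psmulC psmulDl !(psmulC f). Qed.
HB.instance Definition _ := Monoid.isAddLaw.Build ps (@psmul R) psadd psmulDl psmulDr.

Lemma pssumE I (r : seq I) (P : pred I) (F : I -> ps) n :
  (\big[psadd/ps0]_(i <- r | P i) F i) n = \sum_(i <- r | P i) F i n.
Proof.
elim: r => [|a r IH]; first by rewrite !big_nil.
by rewrite !big_cons; case: (P a) => //; rewrite /psadd IH.
Qed.


Definition psscale (a : R) f : ps := fun n => a * f n.

Lemma psmulZl a f g : psmul (psscale a f) g = psscale a (psmul f g).
Proof.
apply: functional_extensionality => n; rewrite /psmul /psscale mulr_sumr.
by apply: eq_bigr => i _; rewrite mulrA.
Qed.

Lemma psmulZr a f g : psmul f (psscale a g) = psscale a (psmul f g).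
Proof. by rewrite psmulC psmulZl psmulC. Qed.

Lemma psmul_coef0 f g : psmul f g 0 = f 0%N * g 0%N.
Proof. by rewrite /psmul big_ord_recl big_ord0 addr0. Qed.

Lemma psprod_coef0 I (r : seq I) (P : pred I) (F : I -> ps) :
  (\big[@psmul R/ps1 R]_(i <- r | P i) F i) 0%N = \prod_(i <- r | P i) F i 0%N.
Proof.
elim: r => [|a r IH]; first by rewrite !big_nil.
by rewrite !big_cons; case: (P a) => //; rewrite psmul_coef0 IH.
Qed.

Lemma size_psdiv_seq f g n : size (psdiv_seq f g n) = n.+1.
Proof. by elim: n => [|n IH] //=; rewrite size_rcons IH. Qed.

Lemma nth_psdiv_seq f g n i : (i <= n)%N -> nth 0 (psdiv_seq f g n) i = psdiv f g i.
Proof.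
elim: n => [|n IH] Hi.
  by move: Hi; rewrite leqn0 => /eqP ->.
rewrite leq_eqVlt in Hi; case/orP: Hi => [/eqP -> //|Hi].
rewrite /= nth_rcons size_psdiv_seq Hi; exact: IH.
Qed.

Lemma psdivP f g : g 0%N != 0 -> psmul (psdiv f g) g = f.
Proof.
move=> g0; apply: functional_extensionality => n; case: n => [|n].
  by rewrite psmul_coef0 /psdiv /= divfK.
rewrite psmulC /psmul big_ord_recl /= subn0.
have -> : psdiv f g n.+1 = (f n.+1 - \sum_(1 <= k < n.+2) g k * nth 0 (psdiv_seq f g n) (n.+1 - k)%N) / g 0%N.
  by rewrite /psdiv /= nth_rcons size_psdiv_seq ltnn eqxx.
rewrite big_add1 /= big_mkord.
rewrite (eq_bigr (fun i : 'I_n.+1 => g i.+1 * psdiv f g (n - i)%N)); last first.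
  move=> i _; rewrite subSS; congr (_ * _); apply: nth_psdiv_seq; exact: leq_subr.
rewrite [X in _ + X](eq_bigr (fun i : 'I_n.+1 => g i.+1 * psdiv f g (n - i)%N)) //.
by rewrite mulrC divfK // subrK.
Qed.

Lemma psmul_injl q1 q2 g : g 0%N != 0 -> psmul q1 g = psmul q2 g -> q1 = q2.
Proof.
move=> g0 E; apply: functional_extensionality => n.
elim/ltn_ind: n => n IH.
have := congr1 (fun F => F n) E; rewrite /psmul !big_ord_recr /= subnn.
rewrite (eq_bigr (fun i : 'I_n => q2 i * g (n - i)%N)); last first.
  by move=> i _; rewrite IH.
by move/addrI/mulIf; apply.
Qed.

Lemma psdiv_uniq f g q : g 0%N != 0 -> psmul q g = f -> psdiv f g = q.
Proof. by move=> g0 E; apply: (psmul_injl g0); rewrite psdivP // E. Qed.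


Lemma fact_neq0 n : (n`!)%:R != 0 :> R.
Proof. by rewrite pnatr_eq0 -lt0n fact_gt0. Qed.

Lemma psexp0 : psexp (0 : R) = ps1 R.
Proof.
apply: functional_extensionality => n; rewrite /psexp /ps1 expr0n.
by case: n => [|n] //=; rewrite ?mul0r // divr1.
Qed.

Lemma psexpD (a b : R) : psmul (psexp a) (psexp b) = psexp (a + b).
Proof.
apply: functional_extensionality => n; rewrite /psmul /psexp addrC exprDn mulr_suml.
apply: eq_bigr => i _.
have hi : (i <= n)%N by rewrite -ltnS.
have E : (n`!)%:R = ('C(n, i))%:R * ((i`!)%:R * ((n - i)`!)%:R) :> R.
  by rewrite -!natrM bin_fact.
rewrite E -mulr_natr.
have h1 := fact_neq0 i; have h2 := fact_neq0 (n - i).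
have h3 : ('C(n, i))%:R != 0 :> R by rewrite pnatr_eq0 -lt0n bin_gt0.
field.
by rewrite h3 h1 h2.
Qed.

Lemma psexp_sum I (r : seq I) (P : pred I) (c : I -> R) :
  psexp (\sum_(i <- r | P i) c i) = \big[@psmul R/ps1 R]_(i <- r | P i) psexp (c i).
Proof.
elim: r => [|a r IH]; first by rewrite !big_nil psexp0.
by rewrite !big_cons; case: (P a) => //; rewrite -IH psexpD.
Qed.

Definition psX : ps := fun n => (n == 1%N)%:R.

Lemma psmulX f : psmul psX f = fun n => if n is n'.+1 then f n' else 0.
Proof.
apply: functional_extensionality => n; rewrite /psmul; case: n => [|n].
  by rewrite big_ord_recl big_ord0 /psX /= mul0r addr0.
rewrite big_ord_recl /psX /= mul0r add0r big_ord_recl /= mul1r subn1 /=.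
by rewrite big1 ?addr0 // => i _; rewrite /bump /= mul0r.
Qed.

Lemma psX_inj f g : psmul psX f = psmul psX g -> f = g.
Proof.
rewrite !psmulX => E; apply: functional_extensionality => n.
exact: (congr1 (fun F => F n.+1) E).
Qed.

Lemma bernX (c : R) : c != 0 ->
  psmul psX (bern_factor c) = psscale c^-1 (psadd (psexp c) (psscale (-1) (ps1 R))).
Proof.
move=> c0; rewrite psmulX; apply: functional_extensionality => n.
rewrite /psscale /psadd /psexp /ps1 /bern_factor; case: n => [|n] /=.
  by rewrite expr0 divr1 mulN1r subrr mulr0.
by rewrite mulr0 addr0 exprS !mulrA mulVf // mul1r.
Qed.

Lemma sylvX (c : R) :
  psmul psX (sylv_factor c) = psadd (ps1 R) (psscale (-1) (psexp (- c))).
Proof.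
rewrite psmulX; apply: functional_extensionality => n.
rewrite /psscale /psadd /psexp /ps1 /sylv_factor; case: n => [|n] /=.
  by rewrite expr0 divr1 mulN1r subrr.
by rewrite add0r mulN1r mulNr.
Qed.

Lemma telesc (c : R) j :
  psmul (psadd (psexp c) (psscale (-1) (ps1 R))) (\big[psadd/ps0]_(r < j) psexp (r%:R * c))
  = psadd (psexp (j%:R * c)) (psscale (-1) (ps1 R)).
Proof.
rewrite big_distrr /=; apply: functional_extensionality => n; rewrite pssumE.
rewrite (eq_bigr (fun r : 'I_j => psexp (r.+1%:R * c) n - psexp (r%:R * c) n)); last first.
  move=> r _; rewrite psmulDl psmulZl psmul1l psexpD /psadd /psscale mulN1r.
  by congr (psexp _ _ - _); rewrite -natr1 mulrDl mul1r addrC.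
rewrite -(big_mkord xpredT (fun r => psexp (r.+1%:R * c) n - psexp (r%:R * c) n)) /=.
by rewrite telescope_sumr // mul0r psexp0 /psadd /psscale mulN1r.
Qed.


Lemma bern_tel (c : R) j : c != 0 -> (0 < j)%N ->
  psmul (bern_factor c) (\big[psadd/ps0]_(r < j) psexp (r%:R * c))
  = psscale j%:R (bern_factor (j%:R * c)).
Proof.
move=> c0 j0; have jc0 : j%:R * c != 0 by rewrite mulf_neq0 // pnatr_eq0 -lt0n.
apply: psX_inj; rewrite psmulA bernX // psmulZl telesc psmulZr bernX //.
apply: functional_extensionality => n; rewrite /psscale invfM mulrA mulrA.
by rewrite divff ?mul1r // pnatr_eq0 -lt0n.
Qed.

Lemma sylv_bern (c : R) : c != 0 ->
  sylv_factor c = psscale c (psmul (psexp (- c)) (bern_factor c)).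
Proof.
move=> c0; apply: psX_inj; rewrite sylvX psmulZr psmulA (psmulC psX) -psmulA.
rewrite bernX // psmulZr psmulDr psmulZr psexpD psmul1r addNr psexp0.
apply: functional_extensionality => n; rewrite /psscale /psadd mulrA divff // mul1r.
by rewrite addrC.
Qed.


Lemma pscaleA (a b : R) f : psscale a (psscale b f) = psscale (a * b) f.
Proof. by apply: functional_extensionality => n; rewrite /psscale mulrA. Qed.

Lemma psscale1 f : psscale 1 f = f.
Proof. by apply: functional_extensionality => n; rewrite /psscale mul1r. Qed.

Lemma psprod_scale I (r : seq I) (P : pred I) (a : I -> R) (F : I -> ps) :
  \big[@psmul R/ps1 R]_(i <- r | P i) psscale (a i) (F i)
  = psscale (\prod_(i <- r | P i) a i) (\big[@psmul R/ps1 R]_(i <- r | P i) F i).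
Proof.
elim: r => [|x r IH]; first by rewrite !big_nil psscale1.
rewrite !big_cons; case: (P x) => //.
by rewrite IH psmulZl psmulZr pscaleA mulrC.
Qed.

Lemma bernH0 q (e : 'I_q -> R) : bernoulliH e 0%N = 1.
Proof.
rewrite /bernoulliH psprod_coef0 big1 // => i _.
by rewrite /bern_factor expr0 mul1r invr1.
Qed.

End PST.

Lemma part2 (R : numFieldType) (m : nat) (d : 'I_m -> nat) (s : R) :
  (forall i, 0 < d i)%N ->
  1 / ((m.-1)`!%:R * (prodd d)%:R) *
      higherBernoulli m.-1 (s + (sumd d)%:R) (fun i => (d i)%:R : R)
  = sylvesterW1 s d.
Proof.
move=> dpos.
set x0 := s + (sumd d)%:R.
set D := bernoulliH (fun i => (d i)%:R : R).
set Q := psdiv (psexp x0) D.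
have QD : psmul Q D = psexp x0 by apply: psdivP; rewrite /D bernH0 oner_neq0.
have pi0 : (prodd d)%:R != 0 :> R.
  by rewrite pnatr_eq0 -lt0n /prodd prodn_gt0.
have S_E : \big[@psmul R/ps1 R]_(k < m) sylv_factor ((d k)%:R : R)
   = psscale (prodd d)%:R (psmul (psexp (- (sumd d)%:R)) D).
  rewrite (eq_bigr (fun k => psscale (d k)%:R (psmul (psexp (- (d k)%:R)) (bern_factor ((d k)%:R : R))))); last first.
    by move=> k _; rewrite sylv_bern // pnatr_eq0 -lt0n.
  rewrite psprod_scale big_split /= -psexp_sum /prodd natr_prod /sumd natr_sum sumrN.
  by [].
rewrite /sylvesterW1 S_E.
rewrite (@psdiv_uniq _ _ _ (psscale (prodd d)%:R^-1 Q)); last first.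
- rewrite psmulZl psmulZr pscaleA mulVf // psscale1 psmulC -psmulA (psmulC D) QD.
  by rewrite psexpD /x0 addrCA addNr addr0.
- rewrite /psscale psmul_coef0 /D bernH0 /psexp expr0 divr1 mulr1. by rewrite mulr1.
rewrite /higherBernoulli -/D -/Q /psscale.
have f0 := fact_neq0 R m.-1.
by rewrite div1r invfM mulrACA mulVf // mul1r.
Qed.


Lemma count_prod (R : numFieldType) m k (x : R) : (k <= m)%N ->
  \prod_(i < m) (if (i < k)%N then 1 else x) = x ^+ (m - k).
Proof.
move=> km.
rewrite -(big_mkord xpredT (fun i => if (i < k)%N then 1 else x)).
rewrite (big_cat_nat (leq0n k) km) /=.
rewrite big_nat_cond big1 ?mul1r; last by move=> i /andP[/andP[_ ->]].
rewrite big_nat_cond (eq_bigr (fun _ => x)) -?big_nat_cond ?prodr_const_nat //.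
by move=> i /andP[/andP[h _] _]; rewrite ltnNge h.
Qed.

Lemma part1 (R : numFieldType) (m : nat) (d : 'I_m -> nat) (j k : nat) (s : R) :
  (forall i, 0 < d i)%N ->
  (2 <= j)%N ->
  (k <= m)%N ->
  (j%:R ^- (m - k)) / ((m.-1)`!%:R * (prodd d)%:R) *
    (\sum_(r : {ffun 'I_m -> 'I_j} | [forall i : 'I_m, (i < k)%N ==> (r i == 0%N :> nat)])
       higherBernoulli m.-1
         (s + (sumd d)%:R + \sum_(i : 'I_m | (k <= i)%N) (r i)%:R * (d i)%:R)
         (fun i => (dscaled d j k i)%:R))
  = 1 / ((m.-1)`!%:R * (prodd d)%:R) *
      higherBernoulli m.-1 (s + (sumd d)%:R) (fun i => (d i)%:R).
Proof.
move=> dpos j2 km.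
have j0 : (0 < j)%N by apply: leq_trans j2.
set x0 := s + (sumd d)%:R.
set D := bernoulliH (fun i => (d i)%:R : R).
set Q := psdiv (psexp x0) D.
have QD : psmul Q D = psexp x0 by apply: psdivP; rewrite /D bernH0 oner_neq0.
set Dj := bernoulliH (fun i => (dscaled d j k i)%:R : R).
have Dj0 : Dj 0%N != 0 by rewrite /Dj bernH0 oner_neq0.
have pi0 : (prodd d)%:R != 0 :> R.
  by rewrite pnatr_eq0 -lt0n /prodd prodn_gt0.
have jn0 : j%:R != 0 :> R by rewrite pnatr_eq0 -lt0n.
pose G (i : 'I_m) := \big[@psadd R/ps0 R]_(a : 'I_j | (i < k)%N ==> (a == 0%N :> nat))
   psexp ((a : nat)%:R * (d i)%:R : R).
have K : psmul D (\big[@psmul R/ps1 R]_i G i) = psscale (j%:R ^+ (m - k)) Dj.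
  rewrite /D /bernoulliH -big_split /=.
  rewrite (eq_bigr (fun i : 'I_m => psscale (if (i < k)%N then 1 else j%:R)
     (bern_factor ((dscaled d j k i)%:R : R)))).
    by rewrite psprod_scale count_prod.
  move=> i _; rewrite /G /dscaled; case: ifP => ik /=.
    rewrite (big_pred1 (Ordinal j0)); last by move=> a.
    by rewrite /= mul0r psexp0 psmul1r psscale1.
  rewrite bern_tel ?natrM // pnatr_eq0 -lt0n; exact: dpos.
set P := (fun r : {ffun 'I_m -> 'I_j} => [forall i : 'I_m, (i < k)%N ==> (r i == 0%N :> nat)]).
pose xr (r : {ffun 'I_m -> 'I_j}) := x0 + \sum_(i : 'I_m | (k <= i)%N) (r i)%:R * (d i)%:R.
have C : (fun n => \sum_(r | P r) psdiv (psexp (xr r)) Dj n) = psscale (j%:R ^+ (m - k)) Q.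
  transitivity (\big[@psadd R/ps0 R]_(r | P r) psdiv (psexp (xr r)) Dj).
    by apply: functional_extensionality => n; rewrite pssumE.
  apply: (psmul_injl Dj0).
  rewrite big_distrl /= (eq_bigr (fun r => psexp (xr r))); last first.
    by move=> r _; rewrite psdivP.
  rewrite psmulZl -psmulZr -K psmulA QD bigA_distr_big_dep big_distrr /=.
  apply: eq_big.
    move=> r; rewrite /P; apply/idP/idP => [/forallP H|/familyP H].
      by apply/familyP => i; exact: H i.
    by apply/forallP => i; exact: H i.
  move=> r Pr; rewrite -psexp_sum psexpD /xr; congr (psexp (x0 + _)).
  rewrite [RHS](bigID (fun i : 'I_m => (k <= i)%N)) /= [X in _ = _ + X]big1 ?addr0 // => i hi.
  move/forallP: Pr => /(_ i); rewrite ltnNge hi /= => /eqP ->.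
  by rewrite mul0r.
have C1 := congr1 (fun F => F m.-1) C; rewrite /= in C1.
rewrite /higherBernoulli -mulr_sumr.
rewrite -/x0 -/Dj -/D -/Q.
transitivity (j%:R ^- (m - k) / ((m.-1)`!%:R * (prodd d)%:R) *
  ((m.-1)`!%:R * psscale (j%:R ^+ (m - k)) Q m.-1)); first by rewrite -C1.
rewrite /psscale; have hJ : j%:R ^+ (m - k) != 0 :> R by rewrite expf_neq0.
rewrite [X in _ * X]mulrCA mulrA (mulrAC (j%:R ^- (m - k))).
by rewrite !mulrA mulVf // !mul1r mulrC !mulrA.
Qed.

Theorem mainTheorem3 (R : numFieldType) (m : nat) (d : 'I_m -> nat) (j k : nat)
    (s : R) :
  (0 < m)%N ->
  (forall i, 0 < d i)%N ->
  (2 <= j)%N ->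
  (k <= m)%N ->
  (forall i : 'I_m, (j %| d i)%N = (i < k)%N) ->
  (j%:R ^- (m - k)) / ((m.-1)`!%:R * (prodd d)%:R) *
    (\sum_(r : {ffun 'I_m -> 'I_j} | [forall i : 'I_m, (i < k)%N ==> (r i == 0%N :> nat)])
       higherBernoulli m.-1
         (s + (sumd d)%:R + \sum_(i : 'I_m | (k <= i)%N) (r i)%:R * (d i)%:R)
         (fun i => (dscaled d j k i)%:R))
  = 1 / ((m.-1)`!%:R * (prodd d)%:R) *
      higherBernoulli m.-1 (s + (sumd d)%:R) (fun i => (d i)%:R)
  /\
  1 / ((m.-1)`!%:R * (prodd d)%:R) *
      higherBernoulli m.-1 (s + (sumd d)%:R) (fun i => (d i)%:R : R)
  = sylvesterW1 s d.
Proof.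
move=> _ dpos j2 km _; split; first exact: part1.
exact: part2.
Qed.
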